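(* Let $n \ge 2$ be an integer. If $M$ is a real $n\times n$ matrix such that each of the numbers $0,1,\dots,n-1$ appears exactly $n$ times in $M$, then $$|\det M| \le n^n\,\frac{n-1}{2}\left(\frac{n+1}{12}\right)^{\frac{n-1}{2}}.$$ If $M$ is a real $n\times n$ matrix such that each of the numbers $1,2,\dots,n$ appears exactly $n$ times in $M$, then $$|\det M| \le n^n\,\frac{n+1}{2}\left(\frac{n+1}{12}\right)^{\frac{n-1}{2}}.$$ *)

(* Defs.v *)
From HB Require Import structures.
From mathcomp Require Import all_boot all_order all_algebra.
Set Implicit Arguments. Unset Strict Implicit. Unset Printing Implicit Defensive.
Import Order.TTheory GRing.Theory Num.Theory.
Local Open Scope ring_scope.

Definition entry_count (R : eqType) (n : nat) (M : 'M[R]_n) (x : R) : nat :=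
  #|[set ij : 'I_n * 'I_n | M ij.1 ij.2 == x]|.

(* Main.v *)
Require Import Defs.
From HB Require Import structures.
From mathcomp Require Import all_boot all_order all_algebra.
From mathcomp Require Import ring lra.
Import Order.TTheory GRing.Theory Num.Theory.
Local Open Scope ring_scope.


Section H.
Variable R : realFieldType.

Lemma det_schur1 n (al : R) (b : 'M[R]_(1, n)) (c : 'M[R]_(n, 1)) (d : 'M[R]_n) :
  al != 0 ->
  \det (block_mx al%:M b c d) = al * \det (d - al^-1 *: (c *m b)).
Proof.
move=> al0.
have -> : block_mx al%:M b c d =
   block_mx 1%:M 0 (al^-1 *: c) 1%:M *m block_mx al%:M b 0 (d - al^-1 *: (c *m b)).
  rewrite mulmx_block !mul1mx !mul0mx !addr0 ?mulmx1 ?mul0mx ?add0r.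
  rewrite scalemxAl [_ + (d - _)]addrC subrK.
  by rewrite mul_mx_scalar scalerA mulrC mulVf // scale1r.
by rewrite det_mulmx det_lblock det_ublock !det1 !det_scalar1 !mul1r.
Qed.

Lemma hadamard_gram n : forall m (B : 'M[R]_(m, n)),
  \det (B^T *m B) <= \prod_(j < n) (B^T *m B) j j.
Proof.
elim: n => [|n IH] m B.
  by rewrite det_mx00 big_ord0.
have diag_ge0 : forall p q (C : 'M[R]_(p, q)) j, 0 <= (C^T *m C) j j.
  move=> p q C j; rewrite mxE; apply: sumr_ge0 => i _; rewrite mxE.
  by rewrite -expr2 sqr_ge0.
move: B; rewrite -[n.+1]/(1 + n)%N => B.
rewrite -[B]hsubmxK.
set b1 := lsubmx B; set B' := rsubmx B.
rewrite tr_row_mx mul_col_row.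
set al := (b1^T *m b1) 0 0.
have Hal : b1^T *m b1 = al%:M by rewrite {1}[b1^T *m b1]mx11_scalar.
have al_ge0 : 0 <= al by exact: diag_ge0.
rewrite (@big_split_ord _ _ _ 1 n) big_ord1.
rewrite block_mxEul Hal mxE eqxx mulr1n.
have -> : \prod_(i < n) block_mx al%:M (b1^T *m B') (B'^T *m b1) (B'^T *m B')
          (rshift 1 i) (rshift 1 i) = \prod_(i < n) (B'^T *m B') i i.
  by apply: eq_bigr => i _; rewrite block_mxEdr.
have [al0|alN0] := eqVneq al 0.
  have b10 : b1 = 0.
    apply/matrixP => i j; rewrite (ord1 j) mxE.
    move: al0; rewrite /al mxE => /eqP; rewrite psumr_eq0; last first.
      by move=> k _; rewrite !mxE -expr2 sqr_ge0.
    move/allP/(_ i (mem_index_enum _)); rewrite !mxE -expr2 sqrf_eq0 => /eqP //.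
  rewrite b10 trmx0 mul0mx mulmx0 al0 det_lblock det_scalar1 mul0r ?mul0r.
  by rewrite /= mul0r.
rewrite /= det_schur1 //.
set P : 'M[R]_m := 1%:M - al^-1 *: (b1 *m b1^T).
have HP : P^T = P.
  by rewrite /P linearB /= linearZ /= trmx1 trmx_mul trmxK.
have HPP : P *m P = P.
  rewrite /P mulmxBl mul1mx mulmxBr mulmx1 -scalemxAl -scalemxAr scalerA.
  rewrite -mulmxA (mulmxA b1^T) Hal mul_scalar_mx -scalemxAr scalerA.
  have -> : al^-1 / al * al = al^-1 by rewrite -mulrA mulVf // mulr1.
  by rewrite subrr subr0.
set C := P *m B'.
have HC : C^T *m C = B'^T *m B' - al^-1 *: ((b1^T *m B')^T *m (b1^T *m B')).
  rewrite /C trmx_mul HP mulmxA -(mulmxA B'^T) HPP /P mulmxBr mulmxBl mulmx1.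
  by rewrite -scalemxAr -scalemxAl trmx_mul trmxK !mulmxA.
have al_gt0 : 0 < al by rewrite lt_def alN0.
rewrite [b1^T *m B']lock [B'^T *m b1](_ : _ = (b1^T *m B')^T); last first.
  by rewrite trmx_mul trmxK.
unlock; rewrite -HC ler_pM2l //.
apply: (le_trans (IH _ C)).
apply: ler_prod => j _; rewrite diag_ge0 /= HC !mxE -/(((b1^T *m B')^T *m (b1^T *m B')) j j).
rewrite gerDl oppr_le0; apply: mulr_ge0; first by rewrite invr_ge0 ltW.
by have := diag_ge0 _ _ (b1^T *m B') j; rewrite mxE.
Qed.
End H.

Section M.
Variable R : realFieldType.

Lemma bern (t : R) k : 0 <= t -> t <= 1 -> (1 - t)^+k * (1 + k%:R * t) <= 1.
Proof.
move=> t0 t1; elim: k => [|k IH]; first by rewrite expr0 mul0r addr0 mulr1.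
apply: le_trans IH; rewrite exprSr -mulrA ler_wpM2l ?exprn_ge0 ?subr_ge0 //.
have k0 : 0 <= k%:R :> R by []. rewrite -natr1; nra.
Qed.

Lemma mono (F x y : R) k : F <= k.+1%:R * y -> 0 <= y -> y <= x -> x <= F ->
  x * (F - x)^+k <= y * (F - y)^+k.
Proof.
move=> hF y0 yx xF.
have [a0|aN0] := eqVneq (F - y) 0.
  have -> : x = y by lra.
  by [].
set a := F - y.
have a_gt0 : 0 < a by rewrite lt_def aN0 /a subr_ge0 (le_trans yx xF).
set t := (x - y) / a.
have t0 : 0 <= t by apply: divr_ge0; [rewrite subr_ge0 | apply: ltW].
have t1 : t <= 1.
  rewrite /t ler_pdivrMr // mul1r /a. lra.
have ex : x = y + a * t by rewrite /t mulrC divfK ?gt_eqF //; ring.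
have eFx : F - x = a * (1 - t) by rewrite ex /a; ring.
rewrite eFx exprMn mulrA.
have hk : a <= k%:R * y.
  move: hF; rewrite -natr1 /a; lra.
apply: (le_trans (y := y * (1 + k%:R * t) * a ^+ k * (1 - t) ^+ k)).
  apply: ler_wpM2r; first by rewrite exprn_ge0 // subr_ge0.
  apply: ler_wpM2r; first by rewrite exprn_ge0 // ltW.
  rewrite ex; have h := ler_wpM2r t0 hk; nra.
rewrite -mulrA -mulrA; apply: ler_wpM2l => //; rewrite mulrCA.
rewrite -[X in _ <= X]mulr1; apply: ler_wpM2l; first by rewrite exprn_ge0 // ltW.
by rewrite mulrC bern.
Qed.
End M.

Section HH.
Variable R : rcfType.

Lemma householder n (i0 : 'I_n) : (1 < n)%N ->
  exists H : 'M[R]_n, [/\ H^T = H, H *m H = 1%:M &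
     forall j, H j i0 = (Num.sqrt n%:R)^-1].
Proof.
move=> hn.
set r := Num.sqrt (n%:R : R).
have r2 : r ^+ 2 = n%:R by rewrite sqr_sqrtr // ler0n.
have r0 : r != 0.
  by apply/eqP => h; move: r2; rewrite h expr0n /= => /eqP; rewrite eq_sym pnatr_eq0 => /eqP n0; rewrite n0 in hn.
have r1 : r - 1 != 0.
  apply/eqP => h; have e : r = 1 by apply/eqP; rewrite -subr_eq0 h.
  by move: r2; rewrite e expr1n => /eqP; rewrite eq_sym pnatr_eq1 => /eqP n1; rewrite n1 in hn.
set v : 'cV[R]_n := \col_j (r * (j == i0)%:R - 1).
set c := (r * (r - 1))^-1.
have vv : v^T *m v = (2 * r * (r - 1))%:M.
  apply/matrixP => i j; rewrite (ord1 i) (ord1 j) !mxE eqxx mulr1n.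
  rewrite (bigD1 i0) //= !mxE eqxx.
  under eq_bigr => j' hj' do rewrite !mxE (negbTE hj') mulr0 sub0r mulrNN mulr1.
  rewrite sumr_const cardC1 card_ord.
  have -> : ((n.-1)%:R : R) = n%:R - 1.
    by rewrite -[in RHS](prednK (ltnW hn)) -natr1 addrK.
  rewrite -r2 mulr1; ring.
exists (1%:M - c *: (v *m v^T)); split.
- by rewrite linearB /= linearZ /= trmx1 trmx_mul trmxK.
- rewrite mulmxBl mul1mx mulmxBr mulmx1 -scalemxAl -scalemxAr scalerA.
  rewrite -mulmxA (mulmxA v^T) vv mul_scalar_mx -scalemxAr scalerA.
  have -> : c * c * (2 * r * (r - 1)) = c *+ 2.
    rewrite /c; field; by rewrite r0 r1.
  by rewrite -scalerMnl mulr2n opprB addrK subrK.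
- move=> j; rewrite !mxE /= big_ord1 !mxE eqxx /c.
  case: (j == i0); rewrite ?mulr1n ?mulr0n ?mulr1 ?mulr0; field; by rewrite r0 r1.
Qed.
End HH.

Lemma cauchy_sum (R : realFieldType) n (z : 'I_n -> R) :
  (\sum_i z i) ^+ 2 <= n%:R * \sum_i z i ^+ 2.
Proof.
case: n z => [|n] z; first by rewrite !big_ord0 expr0n /= mul0r.
set s := \sum_i z i.
have e : \sum_i (n.+1%:R * z i - s) ^+ 2 = n.+1%:R * (n.+1%:R * \sum_i z i ^+ 2 - s ^+ 2).
  have -> : \sum_i (n.+1%:R * z i - s) ^+ 2 =
     \sum_i (n.+1%:R ^+ 2 * z i ^+ 2 - (2 * n.+1%:R * s) * z i + s ^+ 2).
    by apply: eq_bigr => i _; ring.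
  rewrite !big_split /= sumrN -!mulr_sumr sumr_const card_ord -/s.
  rewrite -[_ *+ n.+1]mulr_natr; ring.
have : 0 <= n.+1%:R * (n.+1%:R * \sum_i z i ^+ 2 - s ^+ 2).
  by rewrite -e; apply: sumr_ge0 => i _; exact: sqr_ge0.
rewrite pmulr_rge0 ?ltr0Sn // subr_ge0 //.
Qed.

Lemma amgm (R : realFieldType) k (E : 'I_k -> R) : (forall i, 0 <= E i) ->
  \prod_i E i <= ((\sum_i E i) / k%:R) ^+ k.
Proof.
move=> E0; have [+ _] := leif_AGM (A := predT) (fun i _ => E0 i).
by rewrite cardT size_enum_ord.
Qed.
Lemma key (R : rcfType) k (M : 'M[R]_k.+1) : (0 < k)%N ->
  let F := \sum_i \sum_j M i j ^+ 2 in
  let s := \sum_i \sum_j M i j in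
  let y := (s / k.+1%:R) ^+ 2 in
  F <= k.+1%:R * y -> \det M ^+ 2 <= y * ((F - y) / k%:R) ^+ k.
Proof.
move=> k0 F s y hF.
have [H [HT HH Hcol]] := @householder R k.+1 ord0 k0.
set B := M *m H; set G := B^T *m B.
have dH : \det H ^+ 2 = 1 by rewrite expr2 -det_mulmx HH det1.
have detG : \det G = \det M ^+ 2.
  by rewrite /G det_mulmx det_tr /B det_mulmx -expr2 exprMn dH mulr1.
have diag_ge0 : forall j, 0 <= G j j.
  move=> j; rewrite mxE; apply: sumr_ge0 => i _; rewrite mxE.
  by rewrite -expr2 sqr_ge0.
have trG : \sum_j G j j = F.
  have -> : \sum_j G j j = \tr G by [].
  rewrite /G mxtrace_mulC /B trmx_mul -mulmxA (mulmxA H) HT HH mul1mx.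
  rewrite /mxtrace /F; apply: eq_bigr => i _; rewrite mxE.
  by apply: eq_bigr => j _; rewrite mxE expr2.
set r := Num.sqrt (k.+1%:R : R).
have r2 : r ^+ 2 = k.+1%:R by rewrite sqr_sqrtr // ler0n.
have G00 : G 0 0 = (\sum_i (\sum_j M i j) ^+ 2) / k.+1%:R.
  rewrite mxE mulr_suml; apply: eq_bigr => i _.
  rewrite mxE /B mxE.
  have -> : \sum_j M i j * H j 0 = (\sum_j M i j) * r^-1.
    by rewrite mulr_suml; apply: eq_bigr => j _; rewrite Hcol.
  by rewrite -expr2 exprMn exprVn r2.
have yx : y <= G 0 0.
  rewrite G00 /y /s expr_div_n.
  have hc := @cauchy_sum R k.+1 (fun i => \sum_j M i j).
  rewrite ler_pdivrMr ?exprn_gt0 ?ltr0Sn // expr2 mulrA.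
  rewrite divfK ?pnatr_eq0 //.
  by rewrite -expr2 [X in _ <= X]mulrC.
have hsum : F = G 0 0 + \sum_(j < k) G (lift 0 j) (lift 0 j).
  by rewrite -trG big_ord_recl.
have rest0 : 0 <= \sum_(j < k) G (lift 0 j) (lift 0 j).
  by apply: sumr_ge0 => j _.
rewrite -detG; apply: le_trans (hadamard_gram _ _ _ B) _; rewrite -/G big_ord_recl.
apply: (le_trans (y := G 0 0 * ((F - G 0 0) / k%:R) ^+ k)).
  apply: ler_wpM2l => //.
  have -> : F - G 0 0 = \sum_(j < k) G (lift 0 j) (lift 0 j) by rewrite hsum [G 0 0 + _]addrC addrK.
  by apply: amgm.
rewrite !expr_div_n !mulrA; apply: ler_wpM2r.
  by rewrite invr_ge0 exprn_ge0.
apply: mono => //; first by rewrite /y sqr_ge0.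
by rewrite hsum lerDl.
Qed.
Lemma final_bound (R : rcfType) k (M : 'M[R]_k.+1) (m q : R) : (0 < k)%N ->
  0 <= m -> 0 <= q -> q <= m ^+ 2 ->
  \sum_i \sum_j M i j = k.+1%:R ^+ 2 * m ->
  \sum_i \sum_j M i j ^+ 2 = (k.+1%:R * m) ^+ 2 + k%:R * k.+1%:R ^+ 2 * q ->
  `|\det M| <= k.+1%:R ^+ k.+1 * m * Num.sqrt q ^+ k.
Proof.
move=> k0 m0 q0 qm hs hF.
have := @key R k M k0; rewrite /= hs hF.
set n : R := k.+1%:R.
have n0 : n != 0 by rewrite pnatr_eq0.
have kR0 : (k%:R : R) != 0 by rewrite pnatr_eq0 -lt0n.
have kR0' : (0 : R) <= k%:R by [].
have n1 : 1 + k%:R != 0 :> R by rewrite addrC natr1 pnatr_eq0.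
have -> : n ^+ 2 * m / n = n * m by field.
have -> : ((n * m) ^+ 2 + k%:R * n ^+ 2 * q - (n * m) ^+ 2) / k%:R = n ^+ 2 * q by field.
set y := (n * m) ^+ 2.
have hy : y + k%:R * n ^+ 2 * q <= n * y.
  have : k%:R * n ^+ 2 * q <= k%:R * n ^+ 2 * m ^+ 2.
    by apply: ler_wpM2l => //; rewrite mulr_ge0 // sqr_ge0.
  rewrite /y /n -natr1; lra.
move/(_ hy) => hd.
set rhs := n ^+ k.+1 * m * Num.sqrt q ^+ k.
have rhs0 : 0 <= rhs by rewrite /rhs !mulr_ge0 ?exprn_ge0 ?sqrtr_ge0 // ler0n.
have e : y * (n ^+ 2 * q) ^+ k = rhs ^+ 2.
  rewrite /rhs /y !exprMn [n ^+ k.+1]exprS (exprAC (Num.sqrt q)) sqr_sqrtr //.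
  ring.
rewrite -(ler_sqr (normr_ge0 _) rhs0) real_normK ?num_real //.
by rewrite -e.
Qed.
Lemma count_sum (R : numDomainType) n (M : 'M[R]_n) (g : 'I_n -> R) :
  injective g -> (forall k, entry_count M (g k) = n) ->
  forall f : R -> R, \sum_i \sum_j f (M i j) = n%:R * \sum_k f (g k).
Proof.
move=> ginj hc f.
pose c (p : 'I_n * 'I_n) := (\sum_k (M p.1 p.2 == g k))%N.
have cle : forall p, (c p <= 1)%N.
  move=> p; rewrite /c.
  case: (pickP (fun k => M p.1 p.2 == g k)) => [k0 hk0|none].
    rewrite (bigD1 k0) //= hk0 big1 // => k hk.
    apply/eqP; rewrite eqb0; apply/negP => /eqP e; move/eqP: hk0 => e0.
    by move: hk; rewrite (ginj _ _ (etrans (esym e0) e)) eqxx.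
  by rewrite big1 // => k _; rewrite none.
have card_k : forall k, (\sum_p (M p.1 p.2 == g k))%N = n.
  move=> k; rewrite -[in RHS](hc k) /entry_count -sum1_card [RHS]big_mkcond /=.
  by apply: eq_bigr => p _; rewrite inE; case: (_ == _).
have sumc : (\sum_p c p)%N = (\sum_(p : 'I_n * 'I_n) 1)%N.
  rewrite /c exchange_big /=.
  under eq_bigr do rewrite card_k.
  by rewrite sum1_card card_prod card_ord sum_nat_const card_ord.
have c1 : forall p, c p = 1%N.
  have : (\sum_p (1 - c p))%N = 0%N.
    by rewrite sumnB // sumc subnn.
  move/eqP; rewrite sum_nat_eq0 => /forallP h p.
  have := h p; rewrite subn_eq0 => h1.
  by apply/eqP; rewrite eqn_leq cle.
rewrite pair_big /=.
transitivity (\sum_(p : 'I_n * 'I_n) \sum_k ((M p.1 p.2 == g k)%:R * f (g k))).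
  apply: eq_bigr => p _.
  transitivity (\sum_k ((M p.1 p.2 == g k)%:R * f (M p.1 p.2))).
    by rewrite -mulr_suml -natr_sum -/(c p) c1 mul1r.
  by apply: eq_bigr => k _; case: eqP => [->|]; rewrite ?mul0r.
rewrite exchange_big mulr_sumr; apply: eq_bigr => k _.
by rewrite -mulr_suml -natr_sum card_k mulrC.
Qed.

Lemma s1 (R : comRingType) n : \sum_(k < n) (k%:R : R) * 2 = n%:R * (n%:R - 1).
Proof.
elim: n => [|n IH]; first by rewrite big_ord0 !mul0r.
by rewrite big_ord_recr /= IH; ring.
Qed.
Lemma s2 (R : comRingType) n :
  \sum_(k < n) (k%:R : R) ^+ 2 * 6 = n%:R * (n%:R - 1) * (2 * n%:R - 1).
Proof.
elim: n => [|n IH]; first by rewrite big_ord0 !mul0r.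
by rewrite big_ord_recr /= IH; ring.
Qed.
Lemma s3 (R : comRingType) n : \sum_(k < n) (k.+1%:R : R) * 2 = n%:R * (n%:R + 1).
Proof.
elim: n => [|n IH]; first by rewrite big_ord0 !mul0r.
by rewrite big_ord_recr /= IH; ring.
Qed.
Lemma s4 (R : comRingType) n :
  \sum_(k < n) (k.+1%:R : R) ^+ 2 * 6 = n%:R * (n%:R + 1) * (2 * n%:R + 1).
Proof.
elim: n => [|n IH]; first by rewrite big_ord0 !mul0r.
by rewrite big_ord_recr /= IH; ring.
Qed.
Theorem mainTheorem10 (R : rcfType) (n : nat) (hn : (2 <= n)%N) :
  (forall M : 'M[R]_n,
     (forall k : nat, (k < n)%N -> entry_count M k%:R = n) ->
     `|\det M| <= n%:R ^+ n * ((n%:R - 1) / 2)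
                   * Num.sqrt ((n%:R + 1) / 12) ^+ (n - 1)) /\
  (forall M : 'M[R]_n,
     (forall k : nat, (1 <= k <= n)%N -> entry_count M k%:R = n) ->
     `|\det M| <= n%:R ^+ n * ((n%:R + 1) / 2)
                   * Num.sqrt ((n%:R + 1) / 12) ^+ (n - 1)).
Proof.
case: n hn => [|[|k]] // hn.
rewrite subn1 /=.
have hq : 0 <= ((k.+2%:R : R) + 1) / 12 by rewrite divr_ge0 // addr_ge0.
split => M hM.
- pose g (i : 'I_k.+2) : R := (i : nat)%:R.
  have ginj : injective g.
    by move=> i j /eqP; rewrite /g eqr_nat => /eqP /val_inj.
  have hc : forall i, entry_count M (g i) = k.+2 by move=> i; apply: hM.
  have hs := @count_sum R _ M g ginj hc id.
  have hF := @count_sum R _ M g ginj hc (fun x => x ^+ 2).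
  rewrite /= in hs hF.
  have e1 : \sum_i g i = k.+2%:R * (k.+2%:R - 1) / 2.
    by rewrite -s1 -mulr_suml mulfK ?pnatr_eq0.
  have e2 : \sum_i g i ^+ 2 = k.+2%:R * (k.+2%:R - 1) * (2 * k.+2%:R - 1) / 6.
    by rewrite -s2 -mulr_suml mulfK ?pnatr_eq0.
  have hN : (2 : R) <= k.+2%:R by rewrite ler_nat.
  apply: final_bound => //.
  + rewrite divr_ge0 // subr_ge0 ler1n //.
  + nra.
  + by rewrite hs e1; field.
  + by rewrite hF e2; field.
- pose g (i : 'I_k.+2) : R := (i : nat).+1%:R.
  have ginj : injective g.
    by move=> i j /eqP; rewrite /g eqr_nat eqSS => /eqP /val_inj.
  have hc : forall i, entry_count M (g i) = k.+2.
    by move=> i; apply: hM; rewrite ltn0Sn /= ltn_ord.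
  have hs := @count_sum R _ M g ginj hc id.
  have hF := @count_sum R _ M g ginj hc (fun x => x ^+ 2).
  rewrite /= in hs hF.
  have e1 : \sum_i g i = k.+2%:R * (k.+2%:R + 1) / 2.
    by rewrite -s3 -mulr_suml mulfK ?pnatr_eq0.
  have e2 : \sum_i g i ^+ 2 = k.+2%:R * (k.+2%:R + 1) * (2 * k.+2%:R + 1) / 6.
    by rewrite -s4 -mulr_suml mulfK ?pnatr_eq0.
  have hN : (2 : R) <= k.+2%:R by rewrite ler_nat.
  apply: final_bound => //.
  + by rewrite divr_ge0 // addr_ge0.
  + nra.
  + by rewrite hs e1; field.
  + by rewrite hF e2; field.
Qed.
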